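(* Let $k\ge3$ and let $\{H_{r_1},\dots,H_{r_k}\}$ be a set of pairwise parallel hyperplanes in $\mathbb{H}^n$ (pairwise distinct and disjoint in $\mathbb{H}^n$). Suppose all $H_{r_i}$ have a common ideal point $\xi\in\partial\mathbb{H}^n$, and that the group $D\subseteq\mathrm{Iso}(\mathbb{H}^n)$ generated by the reflections $r_i$ across $H_{r_i}$ is a discrete subgroup. Then $D$ is isomorphic to the infinite dihedral group $D_\infty$.
   Context: $\partial\mathbb{H}^n$ is the visual boundary of hyperbolic $n$-space; an ideal point of a hyperplane is an endpoint of a geodesic ray contained in it. *)

(* Defs.v *)
From mathcomp Require Import all_boot all_order all_algebra.
From mathcomp Require Import all_classical all_reals all_analysis.
Set Implicit Arguments. Unset Strict Implicit. Unset Printing Implicit Defensive.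
Import Order.TTheory GRing.Theory Num.Theory.
Local Open Scope ring_scope.

(* Hyperboloid model of H^n inside R^{n+1} = 'cV_(n.+1), coordinate 0 = time. *)
Section Hyp.
Variables (R : realType) (n : nat).
Notation vec := 'cV[R]_(n.+1).
Notation mat := 'M[R]_(n.+1).

Definition eta (i : 'I_n.+1) : R := if val i == 0%N then -1 else 1.

Definition mink (x y : vec) : R := \sum_i eta i * x i 0 * y i 0.

Definition hpoint (x : vec) : Prop := mink x x = -1 /\ 0 < x ord0 0.

(* representatives of points of the visual boundary: future null vectors
   (a boundary point is the positive ray spanned by such a vector) *)
Definition ideal_vec (u : vec) : Prop := mink u u = 0 /\ 0 < u ord0 0.

Definition hyperplane (v : vec) : vec -> Prop := fun x => hpoint x /\ mink x v = 0.

Definition cosh_ (t : R) : R := (expR t + expR (- t)) / 2.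
Definition sinh_ (t : R) : R := (expR t - expR (- t)) / 2.

(* unit-speed geodesic ray from x with unit tangent w (mink x w = 0, mink w w = 1) *)
Definition geod_ray (x w : vec) (t : R) : vec := cosh_ t *: x + sinh_ t *: w.

(* u represents an ideal point of the set H: it is the endpoint (the null ray
   spanned by x + w) of a geodesic ray contained in H *)
Definition ideal_point_of (H : vec -> Prop) (u : vec) : Prop :=
  exists x w : vec, [/\ hpoint x, mink x w = 0, mink w w = 1,
    (forall t, 0 <= t -> H (geod_ray x w t)) &
    exists2 c : R, 0 < c & u = c *: (x + w)].

(* the reflection across hyperplane v^perp: x |-> x - 2 <x,v>/<v,v> v *)
Definition reflmx (v : vec) : mat :=
  \matrix_(i, j) ((i == j)%:R - 2 * v i 0 * (eta j * v j 0) / mink v v).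

Definition gen_group (S : mat -> Prop) : mat -> Prop := fun M =>
  exists s : seq mat,
    (forall A, A \in s -> exists2 B, S B & (A = B \/ A = invmx B)) /\
    M = foldr mulmx 1%:M s.

Definition discrete_set (D : mat -> Prop) : Prop :=
  forall g, D g -> exists2 e : R, 0 < e &
    forall h, D h -> (forall i j, `|h i j - g i j| < e) -> h = g.
End Hyp.

(* The infinite dihedral group, as the group of maps of Z:  x |-> (-1)^s x + m *)
Definition Dinf := (bool * int)%type.
Definition dinf_mul (a b : Dinf) : Dinf :=
  (addb a.1 b.1, a.2 + (if a.1 then - b.2 else b.2))%R.

Definition iso_Dinf (R : realType) (n : nat) (D : 'M[R]_(n.+1) -> Prop) : Prop :=
  exists phi : Dinf -> 'M[R]_(n.+1),
    [/\ injective phi, (forall a, D (phi a)), (forall M, D M -> exists a, phi a = M) &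
        forall a b, phi (dinf_mul a b) = phi a *m phi b].

(* Main.v *)
Require Import Defs.
From mathcomp Require Import all_boot all_order all_algebra.
From mathcomp Require Import all_classical all_reals all_analysis.
From mathcomp Require Import ring lra.
Import Order.TTheory GRing.Theory Num.Theory.
Set Implicit Arguments. Unset Strict Implicit.
Local Open Scope ring_scope.
Local Open Scope classical_set_scope.

Section Lin.
Variables (R : realType) (n : nat).
Notation vec := 'cV[R]_(n.+1).
Notation mat := 'M[R]_(n.+1).
Implicit Types x y z v : vec.
Implicit Types c : R.

Lemma minkC x y : mink x y = mink y x.
Proof. by apply: eq_bigr => i _; rewrite -!mulrA [x i 0 * _]mulrC. Qed.

Lemma minkDl x y z : mink (x + y) z = mink x z + mink y z.
Proof. by rewrite /mink -big_split; apply: eq_bigr => i _; rewrite /= !mxE mulrDr mulrDl. Qed.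

Lemma minkZl a x z : mink (a *: x) z = a * mink x z.
Proof. by rewrite /mink mulr_sumr; apply: eq_bigr => i _; rewrite !mxE; ring. Qed.

Lemma minkNl x z : mink (- x) z = - mink x z.
Proof. by rewrite -scaleN1r minkZl mulN1r. Qed.

Lemma minkDr x y z : mink z (x + y) = mink z x + mink z y.
Proof. by rewrite !(minkC z) minkDl. Qed.
Lemma minkZr a x z : mink z (a *: x) = a * mink z x.
Proof. by rewrite !(minkC z) minkZl. Qed.
Lemma minkNr x z : mink z (- x) = - mink z x.
Proof. by rewrite !(minkC z) minkNl. Qed.

Lemma mink0l z : mink 0 z = 0.
Proof. by rewrite -(scale0r (0 : vec)) minkZl mul0r. Qed.

Lemma refl_act v x :
  reflmx v *m x = x - (2 * mink v x / mink v v) *: v.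
Proof.
apply/matrixP => i j; rewrite ord1 !mxE.
rewrite (eq_bigr (fun k => (i == k)%:R * x k 0 -
   (2 * v i 0 / mink v v) * (eta R k * v k 0 * x k 0))); last first.
  by move=> k _; rewrite !mxE; ring.
rewrite sumrB -mulr_sumr.
rewrite (bigD1 i) //= eqxx mul1r big1 ?addr0; last first.
  by move=> k /negbTE; rewrite eq_sym => ->; rewrite mul0r.
by rewrite /mink; ring.
Qed.

Lemma mx_ext (A B : mat) : (forall x : vec, A *m x = B *m x) -> A = B.
Proof.
move=> H; apply/matrixP => i j.
have := H (delta_mx j 0); rewrite -!colE => /(congr1 (fun M : vec => M i 0)).
by rewrite !mxE.
Qed.

Lemma vec_eq0 x : (forall i, x i 0 = 0) -> x = 0.
Proof. by move=> H; apply/matrixP => i j; rewrite ord1 H mxE. Qed.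


Lemma refl_scale v c : c != 0 -> mink v v != 0 -> reflmx (c *: v) = reflmx v.
Proof.
move=> c0 N0; apply: mx_ext => x; rewrite !refl_act !(minkZl, minkZr).
apply/matrixP => i j; rewrite !mxE; field.
by rewrite N0 c0.
Qed.

Lemma refl_invol v : mink v v != 0 -> reflmx v *m reflmx v = 1%:M.
Proof.
move=> N0; apply: mx_ext => x; rewrite mul1mx -mulmxA !refl_act.
rewrite !(minkDr, minkZr, minkNr).
apply/matrixP => i j; rewrite !mxE; field; done.
Qed.

Lemma hyp_scale v c : c != 0 -> hyperplane (c *: v) = hyperplane v.
Proof.
move=> c0; apply: funext => x; apply: propext; rewrite /hyperplane minkZr.
split=> -[h1 h2]; split=> //.
  by move/eqP: h2; rewrite mulf_eq0 (negbTE c0) /= => /eqP.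
by rewrite h2 mulr0.
Qed.
End Lin.

Section Grp.
Variables (R : realType) (n : nat) (u v : 'cV[R]_(n.+1)).
Notation vec := 'cV[R]_(n.+1).
Notation mat := 'M[R]_(n.+1).
Hypothesis huu : mink u u = 0.
Hypothesis huv : mink u v = 0.
Hypothesis hN : mink v v != 0.
Hypothesis hu0 : u ord0 0 != 0.

Let hvu : mink v u = 0. Proof. by rewrite minkC. Qed.

Definition Rb (b : R) : mat := reflmx (v + b *: u).
Definition Tm (s : R) : mat := locked (Rb (s / 2) *m Rb 0).

Lemma TmE s : Tm s = Rb (s / 2) *m Rb 0.
Proof. by rewrite /Tm -lock. Qed.

Lemma Rb_act b x : Rb b *m x =
  x - (2 * (mink v x + b * mink u x) / mink v v) *: (v + b *: u).
Proof.
rewrite /Rb refl_act !(minkDl, minkDr, minkZl, minkZr) huu hvu huv.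
congr (_ - _ *: _); field; done.
Qed.

Lemma Tm_act s x : Tm s *m x =
  x - (s / mink v v * mink u x) *: v
    + (s / mink v v * mink v x - s ^+ 2 / (2 * mink v v) * mink u x) *: u.
Proof.
rewrite TmE -mulmxA !Rb_act.
rewrite !(minkDl, minkDr, minkZl, minkZr, minkNr, minkNl) huu hvu huv.
apply/matrixP => i j; rewrite !mxE; field; done.
Qed.

Lemma Tm_add s t : Tm s *m Tm t = Tm (s + t).
Proof.
apply: mx_ext => x; rewrite -mulmxA !Tm_act.
rewrite !(minkDl, minkDr, minkZl, minkZr, minkNr, minkNl) huu hvu huv.
apply/matrixP => i j; rewrite !mxE; field; done.
Qed.

Lemma R0R0 : Rb 0 *m Rb 0 = 1%:M.
Proof.
apply: mx_ext => x; rewrite -mulmxA !Rb_act mul1mx.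
rewrite !(minkDl, minkDr, minkZl, minkZr, minkNr, minkNl) huu hvu huv.
apply/matrixP => i j; rewrite !mxE; field; done.
Qed.

Lemma R0T t : Rb 0 *m Tm t = Tm (- t) *m Rb 0.
Proof.
apply: mx_ext => x; rewrite -!mulmxA; rewrite ?(Tm_act, Rb_act).
rewrite !(minkDl, minkDr, minkZl, minkZr, minkNr, minkNl) huu hvu huv.
apply/matrixP => i j; rewrite !mxE; field; done.
Qed.

Lemma RbR0 b : Rb b *m Rb 0 = Tm (2 * b).
Proof. by rewrite TmE [2 * b]mulrC mulfK // pnatr_eq0. Qed.

Lemma Tm0 : Tm 0 = 1%:M.
Proof. by rewrite TmE mul0r R0R0. Qed.

Lemma Tm_v s : Tm s *m v = v + s *: u.
Proof.
rewrite Tm_act huv.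
apply/matrixP => i j; rewrite !mxE; field; done.
Qed.

Lemma Tm_inj0 s : Tm s = 1%:M -> s = 0.
Proof.
move=> h; have := Tm_v s; rewrite h mul1mx => /(congr1 (fun w : vec => w ord0 0)).
rewrite !mxE => /eqP; rewrite eq_sym -subr_eq0 addrAC subrr add0r mulf_eq0 (negbTE hu0) orbF.
by move/eqP.
Qed.

Lemma Tm_entry : exists A B : 'I_n.+1 -> 'I_n.+1 -> R,
  forall s i j, Tm s i j - (1%:M : mat) i j = s * A i j + s ^+ 2 * B i j.
Proof.
exists (fun i j => - (mink u (delta_mx j 0) / mink v v) * v i 0
                   + mink v (delta_mx j 0) / mink v v * u i 0).
exists (fun i j => - (mink u (delta_mx j 0) / (2 * mink v v)) * u i 0).
move=> s i j.
have := Tm_act s (delta_mx j 0); rewrite -colE => /(congr1 (fun w : vec => w i 0)).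
rewrite !mxE => ->; rewrite eqxx andbT; field; done.
Qed.

End Grp.
Lemma zmult (R : realType) (L : R -> Prop) d :
  L 0 -> (forall s t, L s -> L t -> L (s - t)) -> L d ->
  forall m : int, L (m%:~R * d).
Proof.
move=> L0 Lsub Ld.
have Hn : forall k : nat, L (k%:R * d).
  elim=> [|k IH]; first by rewrite mul0r.
  have := Lsub _ _ IH (Lsub _ _ L0 Ld).
  by rewrite sub0r opprK -[k.+1]addn1 natrD mulrDl mul1r.
case=> k; first exact: Hn.
rewrite NegzE mulrNz mulNr -[X in L X]sub0r.
by apply: Lsub => //; rewrite -pmulrn; apply: Hn.
Qed.

Lemma cyclic_sub (R : realType) (L : R -> Prop) (b : R) :
  L 0 -> (forall s t, L s -> L t -> L (s - t)) -> L b -> b != 0 ->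
  (exists2 e, 0 < e & forall s, L s -> `|s| < e -> s = 0) ->
  exists2 d, 0 < d & (L d /\ forall s, L s -> exists m : int, s = m%:~R * d).
Proof.
move=> L0 Lsub Lb b0 [e e0 He].
pose S : set R := fun s => L s /\ 0 < s.
have Sne : S !=set0.
  exists `|b|; split; last by rewrite normr_gt0.
  case: (ler0P b) => _ //; by rewrite -sub0r; apply: Lsub.
have Slb : has_lbound S by exists 0 => s [_ /ltW].
have Sinf : has_inf S by split.
set d := inf S.
have Sd : S d.
  have [s Ss sde] := inf_adherent e0 Sinf.
  have ds : d <= s by apply: ge_inf.
  case: (ltrP d s) => [dls|sd]; last by have -> : d = s by apply/eqP; rewrite eq_le sd ds.
  have [s' Ss' s's] := inf_lt Sne dls.
  have ds' : d <= s' by apply: ge_inf.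
  have := He (s - s') (Lsub _ _ Ss.1 Ss'.1).
  rewrite ger0_norm ?subr_ge0 ?(ltW s's) // => H.
  have : s - s' = 0 by apply: H; lra.
  move=> /eqP; rewrite subr_eq0 => /eqP E; move: s's; rewrite E ltxx //.
have [Ld d0] : L d /\ 0 < d := Sd.
exists d => //; split; first exact: Ld.
move=> s Ls.
exists (Num.floor (s / d)).
have := floor_itv (s / d); set m := Num.floor (s / d) => /andP [h1 h2].
have Lr : L (s - m%:~R * d).
  apply: (Lsub _ _ Ls).
  exact: (@zmult _ L d L0 Lsub Ld m).
have r0 : 0 <= s - m%:~R * d.
  by rewrite subr_ge0 -ler_pdivlMr.
have rd : s - m%:~R * d < d.
  have h3 : s < (m + 1)%:~R * d by rewrite -ltr_pdivrMr.
  by move: h3; rewrite intrD mulrDl mul1r; lra.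
case: (ler0P (s - m%:~R * d)) => r.
  by apply/eqP; rewrite -subr_eq0 eq_le r r0.
have : d <= s - m%:~R * d by apply: ge_inf => //; split.
by rewrite leNgt rd.
Qed.
Section Geo.
Variables (R : realType) (n : nat).
Notation vec := 'cV[R]_(n.+1).
Implicit Types x y z u a b : vec.

Lemma eta0 : eta R (@ord0 n) = -1.
Proof. by rewrite /eta eqxx. Qed.

Lemma etaS (i : 'I_n.+1) : i != ord0 -> eta R i = 1.
Proof. by move=> h; rewrite /eta ifF //; apply/negbTE; move: h; apply: contra => /eqP h; apply/eqP/val_inj. Qed.

Lemma mink_self x : mink x x = - (x ord0 0)^+2 + \sum_(i | i != ord0) (x i 0)^+2.
Proof.
rewrite /mink (bigD1 ord0) //= eta0; congr (_ + _); first by ring.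
by apply: eq_bigr => i hi; rewrite etaS // mul1r expr2.
Qed.

Lemma psd0 x : x ord0 0 = 0 -> 0 <= mink x x /\ (mink x x = 0 -> x = 0).
Proof.
move=> h; rewrite mink_self h expr0n /= oppr0 add0r; split.
  by apply: sumr_ge0 => i _; apply: sqr_ge0.
move=> /psumr_eq0P H; apply: vec_eq0 => i.
case: (eqVneq i ord0) => [->|hi] //.
by apply/eqP; rewrite -sqrf_eq0; apply/eqP; apply: H => // j _; apply: sqr_ge0.
Qed.

Lemma psd u y : mink u u = 0 -> u ord0 0 != 0 -> mink y u = 0 ->
  0 <= mink y y /\ (mink y y = 0 -> y = (y ord0 0 / u ord0 0) *: u).
Proof.
move=> huu hu0 hyu.
set c := y ord0 0 / u ord0 0.
have z0 : (y - c *: u) ord0 0 = 0 by rewrite !mxE /c; field.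
have := psd0 z0.
have -> : mink (y - c *: u) (y - c *: u) = mink y y.
  rewrite !(minkDl, minkDr, minkZl, minkZr, minkNr, minkNl) huu hyu (minkC u y) hyu; ring.
move=> [h1 h2]; split=> // /h2 /eqP; rewrite subr_eq0 => /eqP //.
Qed.

Lemma timelike_ne0 x : mink x x < 0 -> x ord0 0 != 0.
Proof.
move=> h; apply/eqP => /psd0 [h1 _]; move: h; rewrite ltNge h1 //.
Qed.

Lemma mink_e0 w : mink (delta_mx ord0 0 : vec) w = - w ord0 0.
Proof.
rewrite /mink (bigD1 ord0) //= big1 ?addr0.
  by rewrite !mxE eqxx eta0 /= mulr1 mulN1r.
by move=> i hi; rewrite !mxE (negbTE hi) /=; ring.
Qed.

Lemma intersect u a b : mink u u = 0 -> 0 < u ord0 0 -> mink a u = 0 -> mink b u = 0 ->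
  mink a a * mink b b - mink a b ^+ 2 != 0 -> exists x, hyperplane a x /\ hyperplane b x.
Proof.
move=> huu hu0 hau hbu hD.
have [y [hya hyb hyu]] : exists y, [/\ mink y a = 0, mink y b = 0 & mink y u = - u ord0 0].
  set e0 : vec := delta_mx ord0 0.
  set p := mink e0 a; set q := mink e0 b.
  set D := mink a a * mink b b - mink a b ^+ 2.
  exists (e0 + ((- p * mink b b + q * mink a b) / D) *: a + ((- q * mink a a + p * mink a b) / D) *: b).
  rewrite !(minkDl, minkZl) hau hbu (minkC b a) -/p -/q /e0 mink_e0; split.
  - rewrite /D; field; done.
  - rewrite /D; field; done.
  - ring.
have u0 : u ord0 0 != 0 by rewrite gt_eqF.
set g := (mink y y + 1) / (2 * u ord0 0).
set x1 := g *: u + y.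
have hx1 : mink x1 x1 = -1.
  rewrite /x1 !(minkDl, minkDr, minkZl, minkZr) huu hyu (minkC u y) hyu /g; field; done.
have hx1a : mink x1 a = 0 by rewrite /x1 !(minkDl, minkZl) (minkC u a) hau hya; ring.
have hx1b : mink x1 b = 0 by rewrite /x1 !(minkDl, minkZl) (minkC u b) hbu hyb; ring.
have x10 : x1 ord0 0 != 0 by apply: timelike_ne0; rewrite hx1; lra.
case: (ltrP 0 (x1 ord0 0)) => hpos.
  by exists x1; split; split.
exists (- x1).
have hneg : 0 < (- x1) ord0 0 by rewrite mxE oppr_gt0 lt_neqAle x10 hpos.
have hn : mink (- x1) (- x1) = -1 by rewrite minkNl minkNr opprK.
by split; split => //; rewrite minkNl ?hx1a ?hx1b oppr0.
Qed.

End Geo.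

Lemma invol_inv (R : comUnitRingType) n (A : 'M[R]_n.+1) : A *m A = 1%:M -> invmx A = A.
Proof.
move=> h.
have uA : A \in unitmx by case: (mulmx1_unit h).
by rewrite -[invmx A]mulmx1 -h mulmxA mulVmx // mul1mx.
Qed.

Lemma ideal_orth (R : realType) n (w u : 'cV[R]_n.+1) :
  ideal_point_of (hyperplane w) u -> mink w u = 0.
Proof.
move=> [x [w' [hx hxw hww hray [c c0 ->]]]].
have [_ h0] := hray 0 (lexx 0).
have [_ h1] := hray 1 ler01.
rewrite /geod_ray !(minkDl, minkZl) in h0 h1.
rewrite /cosh_ /sinh_ oppr0 expR0 in h0.
have hxw0 : mink x w = 0 by move: h0; lra.
have e1 : expR (-1) < expR (1 : R) by rewrite ltr_expR; lra.
have hw0 : mink w' w = 0.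
  move: h1; rewrite hxw0 mulr0 add0r /sinh_ => /eqP; rewrite mulf_eq0 => /orP [|/eqP //].
  by rewrite mulf_eq0 invr_eq0 pnatr_eq0 orbF subr_eq0 => /eqP h; move: e1; rewrite h ltxx.
by rewrite minkC minkZl minkDl hxw0 hw0 addr0 mulr0.
Qed.

Lemma foldr_mulmx_cat (R : realType) n (s1 s2 : seq 'M[R]_n.+1) :
  foldr mulmx 1%:M (s1 ++ s2) = foldr mulmx 1%:M s1 *m foldr mulmx 1%:M s2.
Proof.
elim: s1 => [|A s IH] /=; first by rewrite mul1mx.
by rewrite IH mulmxA.
Qed.

Lemma solve_lin (R : realType) (a c N K V' U : R) : N != 0 -> c != 0 ->
  c * V' - N * a = K * U -> a = c / N * (V' + (- K / c) * U).
Proof.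
move=> hN hc h.
have -> : a = (c * V' - K * U) / N by rewrite -h; field.
by field; rewrite hc hN.
Qed.

Lemma term_le_sum (R : realType) n (F : 'I_n -> 'I_n -> R) i j :
  (forall i j, 0 <= F i j) -> F i j <= \sum_i' \sum_j' F i' j'.
Proof.
move=> h.
rewrite (bigD1 i) //= (bigD1 j) //= -addrA lerDl.
by apply: addr_ge0; apply: sumr_ge0 => *; [|apply: sumr_ge0 => *]; apply: h.
Qed.

Unset Implicit Arguments.

Theorem mainTheorem7 (R : realType) (n k : nat) (v : 'I_k -> 'cV[R]_(n.+1)) :
  (3 <= k)%N ->
  (forall i, 0 < mink (v i) (v i)) ->
  (forall i j, i != j -> hyperplane (v i) <> hyperplane (v j)) ->
  (forall i j, i != j -> forall x, ~ (hyperplane (v i) x /\ hyperplane (v j) x)) ->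
  (exists xi, ideal_vec xi /\ forall i, ideal_point_of (hyperplane (v i)) xi) ->
  discrete_set (gen_group (fun M => exists i, M = reflmx (v i))) ->
  iso_Dinf (gen_group (fun M => exists i, M = reflmx (v i))).
Proof.
move=> hk hpos hdist hdisj [u [[huu hu0] hid]] hdisc.
have hvu : forall i, mink (v i) u = 0 by move=> i; apply: ideal_orth.
have k0 : (0 < k)%N by apply: leq_trans hk.
have k1 : (1 < k)%N by apply: leq_trans hk.
pose i0 : 'I_k := Ordinal k0.
pose i1 : 'I_k := Ordinal k1.
have i10 : i1 != i0 by [].
set V := v i0.
have hN : 0 < mink V V := hpos i0.
have hN0 : mink V V != 0 by rewrite gt_eqF.
have huV : mink u V = 0 by rewrite minkC hvu.
have hu0' : u ord0 0 != 0 by rewrite gt_eqF.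
have hvb : forall b, mink (V + b *: u) (V + b *: u) != 0.
  move=> b; rewrite !(minkDl, minkDr, minkZl, minkZr) huu huV minkC huV.
  by rewrite !mulr0 !addr0.
have hb : forall j, exists b, reflmx (v j) = Rb u V b /\
                              (b = 0 -> hyperplane (v j) = hyperplane V).
  move=> j.
  set c := mink V (v j).
  have D0 : mink V V * mink (v j) (v j) - c ^+ 2 = 0.
    case: (eqVneq j i0) => [Ej|hj]; first by rewrite /c Ej -/V; ring.
    apply/eqP; apply: contraT => hD.
    have [x [h1 h2]] := intersect huu hu0 (hvu i0) (hvu j) hD.
    have hij : i0 != j by rewrite eq_sym.
    by case: (hdisj i0 j hij x).
  have c0 : c != 0.
    apply/eqP => hc; move: D0; rewrite hc expr0n /= subr0 => /eqP.
    by rewrite mulf_eq0 (gt_eqF hN) (gt_eqF (hpos j)).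
  set z := c *: V - mink V V *: v j.
  have hzu : mink z u = 0.
    rewrite /z !(minkDl, minkZl, minkNl) !hvu; ring.
  have hzz : mink z z = 0.
    rewrite /z !(minkDl, minkDr, minkZl, minkZr, minkNl, minkNr) (minkC (v j) V) -/c.
    rewrite -[RHS](mulr0 (mink V V)) -D0; ring.
  have [_ hz] := psd huu hu0' hzu.
  move: (hz hzz); set K := z ord0 0 / u ord0 0 => hzK.
  exists (- K / c); split.
    have -> : v j = (c / mink V V) *: (V + (- K / c) *: u).
      apply/matrixP => i j'; have := congr1 (fun w : 'cV[R]_n.+1 => w i j') hzK.
      rewrite /z !mxE => h; exact: solve_lin.
    by rewrite refl_scale // mulf_neq0 // invr_eq0.
  move=> hK0.
  have -> : v j = (c / mink V V) *: V.
    apply/matrixP => i j'; have := congr1 (fun w : 'cV[R]_n.+1 => w i j') hzK.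
    rewrite /z !mxE => h; rewrite (solve_lin hN0 c0 h) hK0 mul0r addr0 //.
  by rewrite hyp_scale // mulf_neq0 // invr_eq0.
set S := fun M => exists i, M = reflmx (v i).
set G := gen_group S.
have G1 : G 1%:M by exists [::].
have Gmul : forall A B, G A -> G B -> G (A *m B).
  move=> A B [s1 [h1 ->]] [s2 [h2 ->]]; exists (s1 ++ s2); split.
    by move=> C; rewrite mem_cat => /orP [/h1|/h2].
  by rewrite foldr_mulmx_cat.
have Ggen : forall j, G (reflmx (v j)).
  move=> j; exists [:: reflmx (v j)]; split; last by rewrite /= mulmx1.
  move=> A; rewrite inE => /eqP ->; exists (reflmx (v j)); [by exists j | by left].
have GR0 : G (Rb u V 0) by rewrite /Rb scale0r addr0; apply: (Ggen).
pose L := fun s => G (Tm u V s).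
have L0 : L 0 by rewrite /L Tm0.
have R0TR0 : forall t, Rb u V 0 *m Tm u V t *m Rb u V 0 = Tm u V (- t).
  by move=> t; rewrite R0T // -mulmxA R0R0 // mulmx1.
have Lsub : forall s t, L s -> L t -> L (s - t).
  move=> s t hs ht; rewrite /L -Tm_add // -R0TR0.
  by apply: (Gmul) => //; apply: (Gmul) => //; apply: (Gmul).
have Lb : forall j b, reflmx (v j) = Rb u V b -> L (2 * b).
  by move=> j b h; rewrite /L -RbR0 -h; apply: (Gmul).
have form : forall M, G M -> exists s, L s /\
                exists bb : bool, M = Tm u V s *m (if bb then Rb u V 0 else 1%:M).
  move=> M [s [hs ->]]; elim: s hs => [|A s IH] hs.
    by exists 0; split => //; exists false; rewrite /= Tm0 // mulmx1.
  have [t [Lt [bb hfs]]] := IH (fun B hB => hs B ltac:(by rewrite inE hB orbT)).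
  have [B [j ->] hAB] := hs A (mem_head _ _).
  have [b [hRb _]] := hb j.
  have hA : A = Rb u V b.
    by case: hAB => ->; rewrite hRb // invol_inv // refl_invol.
  exists (2 * b - t); split; first by apply: (Lsub) => //; apply: (Lb) hRb.
  exists (~~ bb); rewrite /= hfs hA.
  have -> : Rb u V b = Tm u V (2 * b) *m Rb u V 0 by rewrite -RbR0 -mulmxA R0R0 // mulmx1.
  rewrite -!mulmxA [Rb u V 0 *m (Tm u V t *m _)]mulmxA R0T // -mulmxA mulmxA Tm_add //.
  by clear hfs; case: bb; rewrite ?R0R0 ?mulmx1.
have [e e0 He] := hdisc 1%:M G1.
have [A [B hAB]] := Tm_entry huu huV hN0.
pose K := \sum_i \sum_j (`|A i j| + `|B i j|) + 1.
have K0 : 0 < K by rewrite /K ltr_pwDr // sumr_ge0 // => i _; rewrite sumr_ge0 // => j _; rewrite addr_ge0.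
have Ldisc : forall s, L s -> `|s| < Num.min 1 (e / K) -> s = 0.
  move=> s Ls; rewrite lt_min => /andP [s1 s2].
  apply: (Tm_inj0 huu huV hN0 hu0'); apply: (He) => // i j.
  rewrite hAB.
  have hAB' : `|A i j| + `|B i j| <= K.
    rewrite /K; apply: ler_wpDr => //.
    by apply: (@term_le_sum _ _ (fun i j => `|A i j| + `|B i j|)) => *; rewrite addr_ge0.
  apply: (le_lt_trans (ler_normD _ _)); rewrite !normrM.
  have hsK : `|s| * K < e by rewrite -ltr_pdivlMr.
  have hA0 : 0 <= `|A i j| by [].
  have hB0 : 0 <= `|B i j| by [].
  have hs0 : 0 <= `|s| by [].
  move: hAB' hsK hA0 hB0 hs0 s1; set a := `|A i j|; set bB := `|B i j|; set x := `|s|.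
  move=> h1 h2 h3 h4 h5 h6.
  have hxx : x * x <= x by nra.
  have h7 : x * x * bB <= x * bB by nra.
  have h8 : x * (a + bB) <= x * K by nra.
  nra.
have [b1 [hRb1 hb10]] := hb i1.
have b1n0 : 2 * b1 != 0.
  rewrite mulf_neq0 ?pnatr_eq0 //; apply/eqP => /hb10 h.
  by apply: (hdist i1 i0 i10).
have eps0 : 0 < Num.min 1 (e / K) by rewrite lt_min ltr01 divr_gt0.
have [d d0 [Ld hdZ]] := cyclic_sub L0 Lsub (Lb _ _ hRb1) b1n0
   (ex_intro2 _ _ (Num.min 1 (e / K)) eps0 Ldisc).
have LZ := zmult L0 Lsub Ld.
pose phi := fun a : Dinf => Tm u V (a.2%:~R * d) *m (if a.1 then Rb u V 0 else 1%:M).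
have phiV : forall a : Dinf, phi a *m V =
    (if a.1 then -1 else 1) *: (V + (a.2%:~R * d) *: u).
  move=> [bb m]; rewrite /phi -mulmxA /=.
  case: bb; last by rewrite mul1mx Tm_v // scale1r.
  have hR0V : Rb u V 0 *m V = - V.
    rewrite Rb_act // huV; apply/matrixP => i j; rewrite !mxE; field; done.
  by rewrite hR0V mulmxN Tm_v // scaleN1r.
exists phi; split.
- move=> [b1' m1] [b2' m2] h.
  have := congr1 (fun M => M *m V) h; rewrite /= !phiV /= => hV.
  have hVu : mink V u = 0 by rewrite minkC.
  have hbb : b1' = b2'.
    have := congr1 (mink V) hV; rewrite !(minkZr, minkDr) hVu !mulr0 !addr0.
    by case: b1' b2' {h hV} => [] [] //= h'; move: h'; lra.
  subst b2'.
  have := congr1 (fun w : 'cV[R]_n.+1 => w ord0 0) hV; rewrite /= !mxE => h0.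
  have hs : m1%:~R * d * u ord0 0 = m2%:~R * d * u ord0 0 :> R.
    by case: b1' {h hV} h0 => /= h0; lra.
  have := mulIf (lt0r_neq0 d0) (mulIf hu0' hs) => /intr_inj ->.
  done.
- move=> [bb m]; rewrite /phi /=; apply: (Gmul); first exact: LZ.
  by case: bb.
- move=> M /form [s [Ls [bb ->]]].
  have [m ->] := hdZ s Ls.
  by exists (bb, m).
- move=> [bb1 m1] [bb2 m2]; rewrite /phi /dinf_mul /=.
  case: bb1 => /=.
  + rewrite intrD intrN mulrDl mulNr -Tm_add //.
    rewrite -[Tm u V _ *m Rb u V 0 *m _]mulmxA [Rb u V 0 *m (Tm _ _ _ *m _)]mulmxA R0T // -!mulmxA.
    by case: bb2 => /=; rewrite ?R0R0 ?mulmx1.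
  + by rewrite intrD mulrDl -Tm_add // mulmx1 mulmxA.
Qed.
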